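(* Fix $0<q<1$. Let $\psi$ be a measurable function on $[1,\infty)$ with $\psi\ge0$, $\psi$ not identically $0$, and $\sup_{\mu\ge1}\{\psi(\mu)/\mu\}<\infty$. Then for $G=E\#F\in\mathcal G$ and $0<\tau<T_q(G)$, $$\int\psi(\mu)\big[e^{-\tau/\mu}-e^{-T_q(G)/\mu}\big]\,dF(\mu)\le\frac1q\sup_{\mu\ge1}\{\psi(\mu)/\mu\}\cdot\frac{\tau e^{-\tau}}{1-e^{-\tau}}.$$
   Context: $E(t)=1-e^{-t}$, $\bar E=1-E$, $\bar G=1-G$. $\mathcal G=\{E\#F:F$ a probability distribution on $[1,\infty)\}$ with $(E\#F)(t)=\int E(t/\mu)\,dF(\mu)$. FDR functional $T_q(G)=\inf\{t:\bar G(t)\ge\frac1q\bar E(t)\}$. *)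

(* Defs.v *)
From HB Require Import structures.
From mathcomp Require Import all_boot all_order all_algebra.
From mathcomp Require Import all_classical all_reals all_analysis.
Set Implicit Arguments. Unset Strict Implicit. Unset Printing Implicit Defensive.
Import Order.TTheory GRing.Theory Num.Theory.
Local Open Scope classical_set_scope.
Local Open Scope ring_scope.

Section Defs.
Variable R : realType.

Definition Ecdf (t : R) : R := 1 - expR (- t).
Definition Ebar (t : R) : R := 1 - Ecdf t.

Definition mixG (F : probability R R) (t : R) : \bar R :=
  (\int[F]_(mu in setT) (Ecdf (t / mu))%:E)%E.

(* FDR functional T_q(G) = inf { t : Gbar(t) >= Ebar(t)/q }  (inf of empty set = +oo) *)
Definition Tq (q : R) (G : R -> \bar R) : \bar R :=
  ereal_inf [set t%:E | t in [set t : R | ((q^-1 * Ebar t)%:E <= 1 - G t)%E]].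
End Defs.

Definition halfline1 (R : realType) : set R := `[1%R, +oo[%classic.

(* Main.v *)
Require Import Defs.
From HB Require Import structures.
From mathcomp Require Import all_boot all_order all_algebra.
From mathcomp Require Import all_classical all_reals all_analysis.
From mathcomp Require Import ring lra.
From mathcomp Require Import measurable_realfun measurable_fun_approximation.
Import Order.TTheory GRing.Theory Num.Theory.
Local Open Scope classical_set_scope.
Local Open Scope ring_scope.

Lemma measurable_invR (R : realType) : measurable_fun [set: R] (@GRing.inv R).
Proof.
have -> : [set: R] = ~` [set 0] `|` [set 0] by rewrite setUC setUv.
apply/measurable_funU => //; first exact: measurableC.
split.
  apply: measurable_realfun.open_continuous_measurable_fun.
    by apply: closed_openC; apply: accessible_closed_set1; apply: hausdorff_accessible; exact: Rhausdorff.
  move=> x; rewrite inE /= => /eqP x0; exact: inv_continuous.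
apply: (eq_measurable_fun (cst (0:R))) (measurable_cst _).
by move=> x; rewrite inE /= => ->; rewrite invr0.
Qed.
Lemma step_ineq (R : realType) (mu a b : R) : 0 < mu ->
  mu * (expR (- a / mu) - expR (- b / mu)) <= (b - a) * expR (- a / mu).
Proof.
move=> mu0; have hmu : mu != 0 by rewrite gt_eqF.
have hX := expR_ge1Dx (- (b - a) / mu).
have -> : - b / mu = - a / mu + (- (b - a) / mu) by field.
rewrite expRD (mulNr (b - a)); rewrite (mulNr (b - a)) in hX.
set E := expR (- a / mu); set X := expR (- ((b - a) / mu)).
have E0 : 0 <= E by exact: expR_ge0.
have h1 : 1 - X <= (b - a) / mu.
  move: hX; rewrite /X; lra.
have -> : mu * (E - E * X) = (mu * E) * (1 - X) by ring.
apply: le_trans (ler_wpM2l _ h1) _; first by rewrite mulr_ge0 // ltW.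
rewrite le_eqVlt; apply/orP; left; apply/eqP; by field.
Qed.

Lemma tele (R : realType) (mu tau t : R) : 0 < mu -> 0 < tau -> forall n : nat,
  mu * (expR (- tau / mu) - expR (- Num.min (n.+1%:R * tau) t / mu)) <=
  \sum_(i < n) (if i.+1%:R * tau < t then tau * expR (- (i.+1%:R * tau) / mu) else 0).
Proof.
move=> mu0 tau0; elim=> [|n IH].
  rewrite big_ord0 mul1r; apply: mulr_ge0_le0; first exact: ltW.
  rewrite subr_le0 ler_expR !mulNr lerN2 ler_pM2r ?invr_gt0 //.
  by rewrite ge_min lexx.
rewrite big_ord_recr /=.
set an := Num.min (n.+1%:R * tau) t.
set an1 := Num.min (n.+2%:R * tau) t.
have -> : mu * (expR (- tau / mu) - expR (- an1 / mu)) =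
  mu * (expR (- tau / mu) - expR (- an / mu)) + mu * (expR (- an / mu) - expR (- an1 / mu)) by ring.
apply: lerD => //.
have hs : n.+2%:R * tau = n.+1%:R * tau + tau by rewrite -[n.+2]addn1 natrD mulrDl mul1r.
case: ifPn => hlt.
  have han : an = n.+1%:R * tau by rewrite /an; apply: min_l; exact: ltW.
  apply: le_trans (@step_ineq _ mu an an1 mu0) _.
  rewrite han; apply: ler_wpM2r; first exact: expR_ge0.
  by rewrite lerBlDl -hs /an1 ge_min lexx.
have han : an = t.
  rewrite /an; apply: min_r. by rewrite leNgt.
have han1 : an1 = t.
  rewrite /an1; apply: min_r; rewrite hs; move: hlt; rewrite -leNgt => h.
  by apply: le_trans h _; rewrite lerDl ltW.
by rewrite han han1 subrr mulr0.
Qed.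

Definition cterm (R : realType) (T : \bar R) (tau mu : R) (i : nat) : \bar R :=
  (if ((i.+1%:R * tau)%:E < T)%E then tau * expR (- (i.+1%:R * tau) / mu) else 0)%:E.
Arguments cterm {R}.

Lemma cterm_ge0 (R : realType) (T : \bar R) (tau mu : R) i : 0 < tau ->
  (0 <= cterm T tau mu i)%E.
Proof.
move=> tau0; rewrite /cterm lee_fin; case: ifP => // _.
by rewrite mulr_ge0 ?expR_ge0 // ltW.
Qed.

Lemma expN_bound (R : realType) (mu s e : R) : 0 < mu -> 0 < s -> 0 < e ->
  mu ^+ 2 < s * e -> mu * expR (- s / mu) <= e.
Proof.
move=> mu0 s0 e0 h.
set x := s / mu.
have x0 : 0 < x by rewrite divr_gt0.
have hx := expR_ge1Dx x.
have hm : expR (- s / mu) * expR x = 1 by rewrite mulNr -expRD addNr expR0.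
set y := expR (- s / mu) in hm *.
have y0 : 0 <= y by exact: expR_ge0.
have hxy : y * x <= 1.
  have : y * (1 + x) <= y * expR x by rewrite ler_wpM2l.
  by rewrite hm; nra.
have hs : x * mu = s by rewrite /x divfK // gt_eqF.
have : (mu * y) * s <= mu ^+ 2.
  by rewrite -hs expr2; nra.
move=> h2.
have : (mu * y) * s < s * e by apply: le_lt_trans h2 h.
rewrite [s * e]mulrC ltr_pM2r //; exact: ltW.
Qed.

Lemma ptB (R : realType) (T : \bar R) (tau mu : R) : 0 < tau -> 1 <= mu ->
  (tau%:E < T)%E ->
  (mu%:E * ((expR (- tau / mu))%:E - expeR (- (T * (mu^-1)%:E))) <=
     \sum_(i <oo) cterm T tau mu i)%E.
Proof.
move=> tau0 mu1 tauT.
have mu0 : 0 < mu by apply: lt_le_trans mu1.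
case: T tauT => [t| |] //; rewrite ?lte_fin => tauT.
  rewrite -EFinM.
  pose n := Num.bound (t / tau).
  have hn : t < n%:R * tau.
    rewrite -ltr_pdivrMr //; apply: archi_boundP; rewrite divr_ge0 // ltW //.
    exact: lt_trans tauT.
  have hmin : Num.min (n.+1%:R * tau) t = t.
    apply: min_r; apply: ltW; apply: lt_le_trans hn _.
    by rewrite ler_pM2r // ler_nat.
  have := @tele _ mu tau t mu0 tau0 n; rewrite hmin !mulNr => h.
  apply: le_trans (nneseries_lim_ge n _); last by move=> k _ _; exact: cterm_ge0.
  rewrite big_mkord /cterm sumEFin lee_fin; apply: (le_trans h).
  by apply: ler_sum => i _; rewrite lte_fin mulNr.
rewrite mulyr gtr0_sg ?invr_gt0 // mul1e /= sube0 -EFinM.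
apply/lee_addgt0Pr => e e0.
pose n := Num.bound (mu ^+ 2 / (tau * e)).
have hn : mu ^+ 2 < n%:R * tau * e.
  rewrite -mulrA -ltr_pdivrMr ?mulr_gt0 //; apply: archi_boundP.
  by rewrite divr_ge0 ?exprn_ge0 ?mulr_ge0 // ltW.
have hmin : Num.min (n.+1%:R * tau) (n.+1%:R * tau) = n.+1%:R * tau by rewrite minxx.
have := @tele _ mu tau (n.+1%:R * tau) mu0 tau0 n; rewrite hmin => h.
have hb : mu * expR (- (n.+1%:R * tau) / mu) <= e.
  apply: expN_bound => //; first by rewrite mulr_gt0.
  apply: lt_le_trans hn _; rewrite ler_pM2r // ler_pM2r // ler_nat.
  done.
have -> : mu * expR (- tau / mu) =
  mu * (expR (- tau / mu) - expR (- (n.+1%:R * tau) / mu)) + mu * expR (- (n.+1%:R * tau) / mu) by ring.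
rewrite EFinD; apply: leeD; last by rewrite lee_fin.
apply: le_trans (nneseries_lim_ge n _); last by move=> k _ _; exact: cterm_ge0.
rewrite big_mkord /cterm sumEFin lee_fin; apply: (le_trans h).
apply: ler_sum => i _; rewrite ltry ifT //.
by rewrite ltr_pM2r // ltr_nat ltnS.
Qed.

Lemma halfP (R : realType) (mu : R) : @halfline1 R mu <-> 1 <= mu.
Proof. by rewrite /halfline1 /= in_itv /= andbT. Qed.

Lemma mhalf (R : realType) : measurable (@halfline1 R).
Proof. exact: measurable_itv. Qed.

Lemma mexpdiv (R : realType) (a : R) :
  measurable_fun [set: R] (fun mu : R => expR (a / mu)).
Proof.
apply: measurableT_comp => //; apply: measurable_realfun.measurable_funM => //.
exact: measurable_invR.
Qed.

Lemma gbound (R : realType) (q : R) (F : probability R R) (r : R) :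
  0 < q -> 0 <= r -> F (@halfline1 R) = 1%E -> (r%:E < Tq q (mixG F))%E ->
  (\int[F]_(mu in @halfline1 R) (expR (- r / mu))%:E <= (q^-1 * expR (- r))%:E)%E.
Proof.
move=> q0 r0 FD rT.
set D := @halfline1 R.
have mD : measurable D := mhalf R.
have FC : F (~` D) = 0%E by rewrite probability_setC // FD subee.
have mf : measurable_fun [set: R] (fun mu => (Ecdf (r / mu))%:E).
  suff : measurable_fun [set: R] (fun mu => Ecdf (r / mu)) by move/measurable_EFinP.
  rewrite /Ecdf; apply: measurable_realfun.measurable_funB => //.
  under eq_fun do rewrite -mulNr.
  exact: mexpdiv.
have mg : measurable_fun [set: R] (fun mu => (expR (- r / mu))%:E).
  by have /measurable_EFinP := @mexpdiv R (- r).
have eqG : mixG F r = (\int[F]_(mu in D) (Ecdf (r / mu))%:E)%E.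
  rewrite /mixG [RHS]integral_mkcond; apply: ae_eq_integral => //.
    by apply/(measurable_restrictT _ mD); exact: measurable_funS mf.
  exists (~` D); split => //; first exact: measurableC.
  move=> x /= hx Dx; apply: hx => _.
  by rewrite /patch mem_set.
have sum1 : (\int[F]_(mu in D) (expR (- r / mu))%:E +
             \int[F]_(mu in D) (Ecdf (r / mu))%:E = 1)%E.
  have h1 : forall x, D x -> (0 <= (expR (- r / x))%:E)%E.
    by move=> x _; rewrite lee_fin expR_ge0.
  have h2 : forall x, D x -> (0 <= (Ecdf (r / x))%:E)%E.
    move=> x /halfP x1; rewrite lee_fin /Ecdf subr_ge0 expR_le1 oppr_le0.
    by rewrite divr_ge0 // (le_trans ler01).
  rewrite -(ge0_integralD F mD h1 (measurable_funS _ _ mg) h2 (measurable_funS _ _ mf)) //.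
  rewrite (eq_integral (fun _ => 1%E)); last first.
    by move=> x _; rewrite -EFinD /Ecdf mulNr addrC subrK.
  by rewrite integral_cst // mul1e; exact: FD.
have Ige0 : (0 <= \int[F]_(mu in D) (expR (- r / mu))%:E)%E.
  by apply: integral_ge0 => x _; rewrite lee_fin expR_ge0.
have Jfin : (\int[F]_(mu in D) (Ecdf (r / mu))%:E)%E \is a fin_num.
  rewrite ge0_fin_numE; last first.
    apply: integral_ge0 => x /halfP x1; rewrite lee_fin /Ecdf subr_ge0 expR_le1 oppr_le0.
    by rewrite divr_ge0 // (le_trans ler01).
  rewrite ltNge leye_eq; apply/negP => /eqP h.
  by move: sum1; rewrite h addey // (gt_eqF (lt_le_trans ltNy0 Ige0)).
have eqI : (\int[F]_(mu in D) (expR (- r / mu))%:E = 1 - mixG F r)%E.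
  by rewrite eqG -sum1 addeK.
rewrite leNgt; apply/negP => hlt.
have : (Tq q (mixG F) <= r%:E)%E.
  apply: ereal_inf_lbound; exists r => //=.
  have -> : Ebar r = expR (- r) by rewrite /Ebar /Ecdf; ring.
  by rewrite -eqI; apply: ltW.
by rewrite leNgt rT.
Qed.

Lemma cint (R : realType) (q : R) (F : probability R R) (tau : R) (i : nat) :
  0 < q -> 0 < tau -> F (@halfline1 R) = 1%E ->
  (\int[F]_(mu in @halfline1 R) cterm (Tq q (mixG F)) tau mu i <=
    (tau * q^-1 * expR (- tau) ^+ i.+1)%:E)%E.
Proof.
move=> q0 tau0 FD.
have mD := mhalf R.
rewrite /cterm; have [h|h] := boolP ((i.+1%:R * tau)%:E < Tq q (mixG F))%E.
  under eq_integral do rewrite EFinM.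
  have hp : forall x, @halfline1 R x -> (0 <= (expR (- (i.+1%:R * tau) / x))%:E)%E.
    by move=> x _; rewrite lee_fin expR_ge0.
  have hm : measurable_fun (@halfline1 R) (fun x => (expR (- (i.+1%:R * tau) / x))%:E).
    have /measurable_EFinP := @mexpdiv R (- (i.+1%:R * tau)).
    by apply: measurable_funS.
  rewrite (ge0_integralZl_EFin F mD hp hm (ltW tau0)).
  have hr : 0 <= i.+1%:R * tau by rewrite mulr_ge0 // ltW.
  have hg := @gbound R q F (i.+1%:R * tau) q0 hr FD h.
  have ht : (0 <= tau%:E)%E by rewrite lee_fin ltW.
  apply: le_trans (lee_wpmul2l ht hg) _.
  by rewrite -EFinM lee_fin -mulrA -mulrN expRM_natl.

rewrite integral0 lee_fin.
by rewrite !mulr_ge0 ?exprn_ge0 ?expR_ge0 ?invr_ge0 // ltW.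
Qed.

Lemma geo (R : realType) (a x : R) : 0 <= a -> 0 < x -> x < 1 ->
  (\sum_(i <oo) (a * x ^+ i.+1)%:E <= (a * x / (1 - x))%:E)%E.
Proof.
move=> a0 x0 x1.
apply: lime_le.
  by apply: is_cvg_nneseries => n _ _; rewrite lee_fin mulr_ge0 ?exprn_ge0 // ltW.
apply: nearW => n; rewrite sumEFin lee_fin.
have ax0 : 0 <= a * x by rewrite mulr_ge0 // ltW.
have nx : `|x| < 1 by rewrite ger0_norm // ltW.
have := @geometric_le_lim R n (a * x) x ax0 x0 nx.
apply: le_trans; rewrite /series /=.
rewrite le_eqVlt; apply/orP; left; apply/eqP.
by apply: eq_bigr => k _; rewrite exprS mulrA.
Qed.

Definition bR (R : realType) (T : \bar R) (tau mu : R) : R :=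
  expR (- tau / mu) - (if T is t%:E then expR (- t / mu) else 0).
Arguments bR {R}.

Lemma bR_eq (R : realType) (T : \bar R) (tau mu : R) : 1 <= mu -> (tau%:E < T)%E ->
  ((expR (- tau / mu))%:E - expeR (- (T * (mu^-1)%:E)))%E = (bR T tau mu)%:E.
Proof.
move=> mu1 tT; have mu0 : 0 < mu by apply: lt_le_trans mu1.
case: T tT => [t| |] //= _.
- by rewrite -EFinD /bR (mulNr t).
- by rewrite mulyr gtr0_sg ?invr_gt0 // mul1e /= sube0 /bR subr0.
Qed.

Lemma bR_ge0 (R : realType) (T : \bar R) (tau mu : R) : 1 <= mu -> 0 < tau ->
  (tau%:E < T)%E -> 0 <= bR T tau mu.
Proof.
move=> mu1 tau0; have mu0 : 0 < mu by apply: lt_le_trans mu1.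
case: T => [t| |] //= h.
- rewrite subr_ge0 ler_expR !mulNr lerN2 ler_pM2r ?invr_gt0 //.
  by rewrite lte_fin in h; exact: ltW.
- by rewrite /bR subr0 expR_ge0.
Qed.

Lemma bR_meas (R : realType) (T : \bar R) (tau : R) :
  measurable_fun [set: R] (fun mu => bR T tau mu).
Proof.
rewrite /bR; apply: measurable_realfun.measurable_funB; first exact: mexpdiv.
case: T => [t| |]; first exact: mexpdiv.
- exact: measurable_cst.
- exact: measurable_cst.
Qed.

Lemma cterm_meas (R : realType) (T : \bar R) (tau : R) i :
  measurable_fun [set: R] (fun mu => cterm T tau mu i).
Proof.
rewrite /cterm; have [h|h] := boolP ((i.+1%:R * tau)%:E < T)%E.
  suff : measurable_fun [set: R] (fun mu => tau * expR (- (i.+1%:R * tau) / mu)).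
    by move/measurable_EFinP.
  apply: measurable_realfun.measurable_funM; first exact: measurable_cst.
  exact: mexpdiv.
exact: measurable_cst.
Qed.

Arguments cterm_meas {R}.
Arguments bR_meas {R}.

Theorem lemma5p6 (R : realType) (q : R) (psi : R -> R) (F : probability R R)
    (tau : R) :
  0 < q < 1 ->
  measurable_fun (@halfline1 R) psi ->
  (forall mu, 1 <= mu -> 0 <= psi mu) ->
  (exists mu, 1 <= mu /\ psi mu != 0) ->
  (ereal_sup [set (psi mu / mu)%:E | mu in (@halfline1 R)] < +oo)%E ->
  F (@halfline1 R) = 1%E ->
  0 < tau -> (tau%:E < Tq q (mixG F))%E ->
  (\int[F]_(mu in (@halfline1 R))
      ((psi mu)%:E * ((expR (- tau / mu))%:E - expeR (- (Tq q (mixG F) * (mu^-1)%:E))))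
   <= (q^-1)%:E * ereal_sup [set (psi mu / mu)%:E | mu in (@halfline1 R)]
      * (tau * expR (- tau) / (1 - expR (- tau)))%:E)%E.
Proof.
move=> /andP[q0 q1] mpsi psi0 _ Sfin FD tau0 tauT.
have mD := mhalf R.
set S := ereal_sup _ in Sfin *.
have hS : forall mu, 1 <= mu -> ((psi mu / mu)%:E <= S)%E.
  by move=> mu mu1; apply: ereal_sup_ubound; exists mu => //; exact/halfP.
have S0 : (0 <= S)%E.
  by apply: le_trans (hS 1 (lexx 1)); rewrite lee_fin divr_ge0 // psi0.
have Sf : S \is a fin_num by rewrite ge0_fin_numE.
set s := fine S.
have Ss : S = s%:E by rewrite /s fineK.
have s0 : 0 <= s by rewrite -lee_fin -Ss.
have psis : forall mu, 1 <= mu -> psi mu <= s * mu.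
  move=> mu mu1; have := hS mu mu1.
  by rewrite Ss lee_fin ler_pdivrMr // (lt_le_trans ltr01 mu1).
set T := Tq q (mixG F) in tauT *.
rewrite (eq_integral (fun mu => (psi mu * bR T tau mu)%:E)); last first.
  by move=> mu /[!inE] /halfP mu1; rewrite bR_eq // EFinM.
have cge0 : forall i mu, (0 <= cterm T tau mu i)%E.
  by move=> i mu; exact: cterm_ge0.
have mc : forall i, measurable_fun (@halfline1 R) (fun mu => cterm T tau mu i).
  by move=> i; have := cterm_meas T tau i; apply: measurable_funS.
have mser : measurable_fun (@halfline1 R) (fun mu => (\sum_(i <oo) cterm T tau mu i)%E).
  by apply: ge0_emeasurable_sum => // k x _ _; exact: cterm_ge0.
have serge0 : forall mu, @halfline1 R mu -> (0 <= \sum_(i <oo) cterm T tau mu i)%E.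
  by move=> mu _; apply: nneseries_ge0 => n _ _; exact: cterm_ge0.
apply: (@le_trans _ _ (\int[F]_(mu in @halfline1 R) (s%:E * \sum_(i <oo) cterm T tau mu i))%E).
  apply: ge0_le_integral => //.
  - move=> mu /halfP mu1; rewrite lee_fin mulr_ge0 ?psi0 //; exact: bR_ge0.
  - suff : measurable_fun (@halfline1 R) (fun mu => psi mu * bR T tau mu).
      by move/measurable_EFinP.
    apply: measurable_realfun.measurable_funM => //.
    by have := bR_meas T tau; apply: measurable_funS.
  - exact: measurable_funeM.
  move=> mu /halfP mu1.
  have hb := @bR_ge0 R T tau mu mu1 tau0 tauT.
  have hp := @ptB R T tau mu tau0 mu1 tauT; rewrite (@bR_eq R T tau mu mu1 tauT) in hp.
  apply: (@le_trans _ _ ((s * mu)%:E * (bR T tau mu)%:E)%E).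
    by rewrite -EFinM lee_fin ler_wpM2r // psis.
  rewrite EFinM -muleA; apply: lee_wpmul2l; first by rewrite lee_fin.
  exact: hp.
rewrite ge0_integralZl_EFin // integral_nneseries //.
set x := expR (- tau).
have x0 : 0 < x by exact: expR_gt0.
have x1 : x < 1 by rewrite expR_lt1 oppr_lt0.
apply: (@le_trans _ _ (s%:E * \sum_(i <oo) (tau * q^-1 * x ^+ i.+1)%:E)%E).
  apply: lee_wpmul2l; first by rewrite lee_fin.
  apply: lee_nneseries.
    by move=> i _ _; apply: integral_ge0 => mu _; exact: cterm_ge0.
  by move=> n _; exact: (@cint R q F tau n q0 tau0 FD).
apply: (@le_trans _ _ (s%:E * (tau * q^-1 * x / (1 - x))%:E)%E).
  apply: lee_wpmul2l; first by rewrite lee_fin.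
  apply: geo => //; rewrite mulr_ge0 // ?invr_ge0 ltW //.
rewrite Ss -!EFinM lee_fin le_eqVlt; apply/orP; left; apply/eqP.
ring.
Qed.
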